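(* For the discrete series representations $\omega_{\ell,\pm}$ ($\ell>1/2$), the localisation of the Dirac operator $D$ has zero kernel. For a principal series representation $\pi_{q,\tau}$ ($q\ge1/4$, $0\le\tau\le1$), the localisation of $D$ at $\pi_{q,\tau}$ (acting on $V_{q,\tau}\oplus V_{q,\tau}$) has nonzero kernel if and only if $(q,\tau)$ lies on the parabolic arc \[ \mathcal{Q}=\{(q,\tau): q+2\tau(\tau-1)=0,\ \tau\in[1/2-1/\sqrt8,\ 1/2+1/\sqrt8]\}. \] At each $(q,\tau)\in\mathcal{Q}$ the kernel (the Dirac cohomology localised at $\pi_{q,\tau}$) is one-dimensional, spanned by the 2-spinor \[ \sqrt{1-\tau}\begin{pmatrix} f_\tau\\ 0\end{pmatrix}-\sqrt{\tau}\begin{pmatrix} 0\\ f_{\tau-1}\end{pmatrix}. \]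
   Context: $G$ is the universal cover of $\mathrm{SL}_2(\mathbb{R})$, $\mathfrak{A}=C^*_r(G)$, $X_0,X_1,X_2$ an orthonormal basis of $\mathfrak{sl}_2(\mathbb{R})$ acting on functions on $G$ as right-invariant vector fields. The Dirac operator is $D=i\begin{pmatrix}X_0& X_1+iX_2\\ X_1-iX_2& -X_0\end{pmatrix}$, an unbounded operator on the Hilbert $\mathfrak{A}$-module $\mathfrak{A}\oplus\mathfrak{A}$. The localisation of $D$ at a representation $(V,\pi)$ in the reduced dual is $D\otimes1$ on $(\mathfrak{A}\oplus\mathfrak{A})\otimes_{\mathfrak{A}}V\cong V\oplus V$; it equals $-\mathbb{H}$, where, with $H_k$ defined by $\exp(-itH_k)=\pi(\exp(tX_k))$ and $H_\pm=H_1\pm iH_2$, $\mathbb{H}=\begin{pmatrix}H_0&H_+\\H_-&-H_0\end{pmatrix}$. The principal series $\pi_{q,\tau}$ on $V_{q,\tau}$ ($q\ge1/4$, $0\le\tau\le1$, Casimir value $q$) has orthonormal basis $f_m$, $m\in\tau+\mathbb{Z}$, with $H_0f_m=mf_m$, $H_+f_m=(q+m(m+1))^{1/2}f_{m+1}$, $H_-f_m=(q+m(m-1))^{1/2}f_{m-1}$. The discrete series $\omega_{\ell,+}$ (resp. $\omega_{\ell,-}$), $\ell>1/2$, with Casimir value $q=\ell(1-\ell)$, has orthonormal basis $f_m$, $m\in\{\ell,\ell+1,\dots\}$ (resp. $m\in\{-\ell,-\ell-1,\dots\}$), with the same formulas except $H_-f_\ell=0$ and $H_+f_{-\ell}=0$.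 *)

(* Defs.v *)
From Stdlib Require Import Reals Lra ZArith Bool.
Open Scope R_scope.

Record Cplx := mkC { Re : R; Im : R }.
Definition C0 : Cplx := mkC 0 0.
Definition Cadd (z w : Cplx) : Cplx := mkC (Re z + Re w) (Im z + Im w).
Definition Copp (z : Cplx) : Cplx := mkC (- Re z) (- Im z).
Definition Cmul (z w : Cplx) : Cplx :=
  mkC (Re z * Re w - Im z * Im w) (Re z * Im w + Im z * Re w).
Definition RCmul (r : R) (z : Cplx) : Cplx := mkC (r * Re z) (r * Im z).
Definition Cnorm2 (z : Cplx) : R := Re z ^ 2 + Im z ^ 2.

(* A vector of V is given by its coefficients in the orthonormal basis (f_m):
   the coefficient of index n : Z is the coefficient of f_{m_n}, where
   m_n = base + n.  The basis is indexed by those n with I n = true: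
     principal series pi_{q,tau} : base = tau,  I = all of Z;
     discrete series omega_{l,+} : base = l,    I = {n >= 0};
     discrete series omega_{l,-} : base = -l,   I = {n <= 0}. *)
Definition coeffs := Z -> Cplx.

Definition weight (base : R) (n : Z) : R := base + IZR n.

Definition supported (I : Z -> bool) (v : coeffs) : Prop :=
  forall n, I n = false -> v n = C0.

Definition sq_summable (v : coeffs) : Prop :=
  exists M, forall N : nat,
    sum_f_R0 (fun k => Cnorm2 (v (Z.of_nat k)) + Cnorm2 (v (- Z.of_nat k))%Z) N <= M.

Definition inV (I : Z -> bool) (v : coeffs) : Prop := supported I v /\ sq_summable v.

Definition H0 (base : R) (I : Z -> bool) (v : coeffs) : coeffs :=
  fun n => if I n then RCmul (weight base n) (v n) else C0.

(* H_+ f_m = (q + m(m+1))^{1/2} f_{m+1}  (zero if f_{m+1} is not a basis vector) *)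
Definition Hplus (q base : R) (I : Z -> bool) (v : coeffs) : coeffs :=
  fun n => if I n && I (n - 1)%Z then
             RCmul (sqrt (q + weight base (n - 1) * (weight base (n - 1) + 1))) (v (n - 1)%Z)
           else C0.

(* H_- f_m = (q + m(m-1))^{1/2} f_{m-1}  (zero if f_{m-1} is not a basis vector) *)
Definition Hminus (q base : R) (I : Z -> bool) (v : coeffs) : coeffs :=
  fun n => if I n && I (n + 1)%Z then
             RCmul (sqrt (q + weight base (n + 1) * (weight base (n + 1) - 1))) (v (n + 1)%Z)
           else C0.

Definition vadd (u v : coeffs) : coeffs := fun n => Cadd (u n) (v n).
Definition vopp (u : coeffs) : coeffs := fun n => Copp (u n).
Definition vscale (c : Cplx) (u : coeffs) : coeffs := fun n => Cmul c (u n).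
Definition vzero : coeffs := fun _ => C0.

Definition bbH (q base : R) (I : Z -> bool) (psi : coeffs * coeffs) : coeffs * coeffs :=
  let (a, b) := psi in
  (vadd (H0 base I a) (Hplus q base I b), vadd (Hminus q base I a) (vopp (H0 base I b))).

(* localisation of the Dirac operator: D (x) 1 = - bold H *)
Definition Dloc (q base : R) (I : Z -> bool) (psi : coeffs * coeffs) : coeffs * coeffs :=
  let (x, y) := bbH q base I psi in (vopp x, vopp y).

Definition in_kernel (q base : R) (I : Z -> bool) (psi : coeffs * coeffs) : Prop :=
  inV I (fst psi) /\ inV I (snd psi) /\ Dloc q base I psi = (vzero, vzero).

Definition I_all : Z -> bool := fun _ => true.
Definition I_pos : Z -> bool := fun n => (0 <=? n)%Z.
Definition I_neg : Z -> bool := fun n => (n <=? 0)%Z.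

Definition onArcQ (q tau : R) : Prop :=
  q + 2 * tau * (tau - 1) = 0 /\ 1/2 - 1 / sqrt 8 <= tau <= 1/2 + 1 / sqrt 8.

(* the spinor sqrt(1-tau) (f_tau, 0) - sqrt(tau) (0, f_{tau-1}) ;
   f_tau has index 0 and f_{tau-1} index -1 when base = tau *)
Definition psi0 (tau : R) : coeffs * coeffs :=
  (fun n => if (n =? 0)%Z then mkC (sqrt (1 - tau)) 0 else C0,
   fun n => if (n =? -1)%Z then mkC (- sqrt tau) 0 else C0).

(* Main.v *)
Require Import Defs.
From Stdlib Require Import Reals ZArith.
From Stdlib Require Import Lra Lia Psatz FunctionalExtensionality.
Open Scope R_scope.

Lemma Cext (z w : Cplx) : Re z = Re w -> Im z = Im w -> z = w.
Proof. destruct z, w; simpl; intros; subst; reflexivity. Qed.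

Lemma kern_eqs q base I a b : Dloc q base I (a,b) = (vzero,vzero) -> forall n,
  Cadd (H0 base I a n) (Hplus q base I b n) = C0 /\
  Cadd (Hminus q base I a n) (Copp (H0 base I b n)) = C0.
Proof.
  intros H n. unfold Dloc, bbH in H. injection H as H1 H2.
  apply (f_equal (fun f => f n)) in H1. apply (f_equal (fun f => f n)) in H2.
  unfold vopp, vadd, vzero in H1, H2.
  split.
  - destruct (Cadd _ _) as [r i]; simpl in H1; injection H1; intros; apply Cext; simpl; lra.
  - destruct (Cadd _ (Copp _)) as [r i]; simpl in H2; injection H2; intros; apply Cext; simpl; lra.
Qed.

Lemma pairC (q m m' s1 s2 : R) (u v : Cplx): m' = m - 1 -> s1 = s2 ->
  s1*s1 = q + m*(m-1) -> q + 2*m*(m-1) <> 0 ->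
  Cadd (RCmul m u) (RCmul s1 v) = C0 -> Cadd (RCmul s2 u) (Copp (RCmul m' v)) = C0 ->
  u = C0 /\ v = C0.
Proof.
  intros -> <- Hs Hd H1 H2. destruct u as [ur ui], v as [vr vi].
  unfold Cadd, RCmul, Copp, C0 in *; simpl in *.
  injection H1 as H1a H1b. injection H2 as H2a H2b.
  assert (Hq : q = s1*s1 - m*(m-1)) by lra.
  assert (E1 : (q + 2*m*(m-1)) * vr = 0).
  { replace ((q + 2*m*(m-1)) * vr) with (s1*(m*ur + s1*vr) - m*(s1*ur + - ((m-1)*vr))) by (rewrite Hq; ring).
    rewrite H1a, H2a; ring. }
  assert (E2 : (q + 2*m*(m-1)) * vi = 0).
  { replace ((q + 2*m*(m-1)) * vi) with (s1*(m*ui + s1*vi) - m*(s1*ui + - ((m-1)*vi))) by (rewrite Hq; ring).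
    rewrite H1b, H2b; ring. }
  assert (E3 : (q + 2*m*(m-1)) * ur = 0).
  { replace ((q + 2*m*(m-1)) * ur) with (s1*(s1*ur + - ((m-1)*vr)) + (m-1)*(m*ur + s1*vr)) by (rewrite Hq; ring).
    rewrite H1a, H2a; ring. }
  assert (E4 : (q + 2*m*(m-1)) * ui = 0).
  { replace ((q + 2*m*(m-1)) * ui) with (s1*(s1*ui + - ((m-1)*vi)) + (m-1)*(m*ui + s1*vi)) by (rewrite Hq; ring).
    rewrite H1b, H2b; ring. }
  apply Rmult_integral in E1, E2, E3, E4.
  split; f_equal; tauto.
Qed.

Lemma gen_pair q base I a b n : Dloc q base I (a,b) = (vzero,vzero) ->
  I n = true -> I (n-1)%Z = true ->
  0 <= q + (base + IZR n)*(base + IZR n - 1) ->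
  q + 2*(base+IZR n)*(base+IZR n - 1) <> 0 ->
  a n = C0 /\ b (n-1)%Z = C0.
Proof.
  intros H In In1 Hpos Hd.
  destruct (kern_eqs _ _ _ _ _ H n) as [E1 _].
  destruct (kern_eqs _ _ _ _ _ H (n-1)%Z) as [_ E2].
  unfold H0, Hplus, Hminus in E1, E2.
  replace (n - 1 + 1)%Z with n in E2 by lia.
  rewrite In, In1 in E1. rewrite In, In1 in E2. simpl in E1, E2.
  unfold weight in *. rewrite minus_IZR in *.
  eapply pairC with (q := q) (m := base + IZR n); [ | | | exact Hd | exact E1 | exact E2].
  - simpl; ring.
  - f_equal. simpl; ring.
  - rewrite sqrt_sqrt; simpl. ring. simpl. replace (q + (base + (IZR n - 1)) * (base + (IZR n - 1) + 1)) with (q + (base + IZR n)*(base + IZR n - 1)) by ring. exact Hpos.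
Qed.

Lemma disc_pos l psi : l > 1/2 -> in_kernel (l*(1-l)) l I_pos psi -> psi = (vzero,vzero).
Proof.
  intros Hl [[Sa _] [[Sb _] H]]. destruct psi as [a b]. simpl in Sa, Sb.
  assert (P : forall n, (1 <= n)%Z -> a n = C0 /\ b (n-1)%Z = C0).
  { intros n Hn. assert (Hn' : 1 <= IZR n) by (apply IZR_le; lia).
    apply (gen_pair _ _ _ _ _ _ H).
    - unfold I_pos; apply Z.leb_le; lia.
    - unfold I_pos; apply Z.leb_le; lia.
    - nra.
    - nra. }
  assert (A0 : a 0%Z = C0).
  { destruct (kern_eqs _ _ _ _ _ H 0%Z) as [E1 _].
    unfold H0, Hplus, I_pos in E1; simpl in E1. unfold weight in E1.
    destruct (a 0%Z) as [r i]. unfold Cadd, RCmul, C0 in E1; simpl in E1.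
    injection E1; intros. apply Cext; simpl; nra. }
  f_equal; apply functional_extensionality; intro n.
  - destruct (Z_lt_le_dec n 0).
    + apply Sa. unfold I_pos. apply Z.leb_gt. lia.
    + destruct (Z.eq_dec n 0). subst; exact A0. apply P; lia.
  - destruct (Z_lt_le_dec n 0).
    + apply Sb. unfold I_pos. apply Z.leb_gt. lia.
    + replace n with (n+1-1)%Z by lia. apply P; lia.
Qed.

Lemma disc_neg l psi : l > 1/2 -> in_kernel (l*(1-l)) (-l) I_neg psi -> psi = (vzero,vzero).
Proof.
  intros Hl [[Sa _] [[Sb _] H]]. destruct psi as [a b]. simpl in Sa, Sb.
  assert (P : forall n, (n <= 0)%Z -> a n = C0 /\ b (n-1)%Z = C0).
  { intros n Hn. assert (Hn' : IZR n <= 0) by (apply IZR_le; lia).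
    apply (gen_pair _ _ _ _ _ _ H).
    - unfold I_neg; apply Z.leb_le; lia.
    - unfold I_neg; apply Z.leb_le; lia.
    - nra.
    - nra. }
  assert (B0 : b 0%Z = C0).
  { destruct (kern_eqs _ _ _ _ _ H 0%Z) as [_ E2].
    unfold H0, Hminus, I_neg in E2; simpl in E2. unfold weight in E2.
    destruct (b 0%Z) as [r i]. unfold Cadd, RCmul, Copp, C0 in E2; simpl in E2.
    injection E2; intros. apply Cext; simpl; nra. }
  f_equal; apply functional_extensionality; intro n.
  - destruct (Z_lt_le_dec 0 n).
    + apply Sa. unfold I_neg. apply Z.leb_gt. lia.
    + apply P; lia.
  - destruct (Z_lt_le_dec 0 n).
    + apply Sb. unfold I_neg. apply Z.leb_gt. lia.
    + destruct (Z.eq_dec n 0). subst; exact B0.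
      replace n with (n+1-1)%Z by lia. apply P; lia.
Qed.

Lemma Cnorm2_ge0 z : 0 <= Cnorm2 z.
Proof. unfold Cnorm2. nra. Qed.

Lemma fin_sq v : (forall n, n <> 0%Z -> n <> (-1)%Z -> v n = C0) -> sq_summable v.
Proof.
  intros Hv. set (f := fun k => Cnorm2 (v (Z.of_nat k)) + Cnorm2 (v (- Z.of_nat k))%Z).
  assert (F2 : forall k, f (S (S k)) = 0).
  { intro k. unfold f. rewrite !Hv by lia. unfold Cnorm2, C0; simpl; ring. }
  assert (S1 : forall N, sum_f_R0 f (S N) = f 0%nat + f 1%nat).
  { induction N. reflexivity. simpl sum_f_R0. simpl sum_f_R0 in IHN. rewrite IHN.
    change (f 0%nat + f 1%nat + f (S (S N)) = f 0%nat + f 1%nat). rewrite F2. ring. }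
  exists (f 0%nat + f 1%nat). intro N. fold f. destruct N.
  - simpl. assert (0 <= f 1%nat) by (unfold f; pose proof (Cnorm2_ge0 (v (Z.of_nat 1))); pose proof (Cnorm2_ge0 (v (- Z.of_nat 1))%Z); lra). lra.
  - rewrite S1. lra.
Qed.

Lemma princ_pair q tau a b n : q >= 1/4 -> 0 <= tau <= 1 ->
  Dloc q tau I_all (a,b) = (vzero,vzero) ->
  (n <> 0%Z \/ q + 2*tau*(tau-1) <> 0) -> a n = C0 /\ b (n-1)%Z = C0.
Proof.
  intros Hq Ht H Hn. apply (gen_pair _ _ _ _ _ _ H); try reflexivity.
  - pose proof (pow2_ge_0 (tau + IZR n - 1/2)). nra.
  - destruct (Z.eq_dec n 0) as [->|Hn0].
    + destruct Hn as [Hn|Hn]; [congruence|]. simpl. replace (tau + 0) with tau by ring. lra.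
    + destruct (Z_lt_le_dec n 0).
      * assert (IZR n <= -1) by (apply IZR_le; lia). nra.
      * assert (1 <= IZR n) by (apply IZR_le; lia). nra.
Qed.

Lemma arc_of q tau : q >= 1/4 -> q + 2*tau*(tau-1) = 0 -> onArcQ q tau.
Proof.
  intros Hq He. split; [exact He|].
  assert (H8 : 0 < sqrt 8) by (apply sqrt_lt_R0; lra).
  assert (Hs : sqrt 8 * sqrt 8 = 8) by (apply sqrt_sqrt; lra).
  set (r := 1 / sqrt 8).
  assert (Hr : 0 < r) by (unfold r; apply Rdiv_lt_0_compat; lra).
  assert (Hr2 : r * r = 1/8) by (unfold r; replace (1/sqrt 8 * (1/sqrt 8)) with (1/(sqrt 8 * sqrt 8)) by (field; lra); rewrite Hs; lra).
  split; nra.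
Qed.

Lemma psi0_kernel q tau c : 0 <= tau <= 1 -> q + 2*tau*(tau-1) = 0 ->
  in_kernel q tau I_all (vscale c (fst (psi0 tau)), vscale c (snd (psi0 tau))).
Proof.
  intros Ht He.
  assert (Hx : sqrt tau * sqrt tau = tau) by (apply sqrt_sqrt; lra).
  assert (Hy : sqrt (1-tau) * sqrt (1-tau) = 1-tau) by (apply sqrt_sqrt; lra).
  assert (Px : 0 <= sqrt tau) by apply sqrt_pos.
  assert (Py : 0 <= sqrt (1-tau)) by apply sqrt_pos.
  assert (Hs : forall z, q + z = tau * (1-tau) -> sqrt (q + z) = sqrt tau * sqrt (1-tau)).
  { intros z Hz. rewrite Hz. apply sqrt_lem_1. nra. nra.
    replace (sqrt tau * sqrt (1 - tau) * (sqrt tau * sqrt (1 - tau))) with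
      ((sqrt tau * sqrt tau) * (sqrt (1 - tau) * sqrt (1 - tau))) by ring. rewrite Hx, Hy; ring. }
  split; [|split]; simpl.
  - split. intros n Hn; discriminate. apply fin_sq. intros n H1 H2.
    unfold vscale. destruct (Z.eqb_spec n 0); [congruence|]. apply Cext; simpl; ring.
  - split. intros n Hn; discriminate. apply fin_sq. intros n H1 H2.
    unfold vscale. destruct (Z.eqb_spec n (-1)); [congruence|]. apply Cext; simpl; ring.
  - unfold Dloc, bbH. f_equal; apply functional_extensionality; intro n;
    unfold vopp, vadd, vzero, H0, Hplus, Hminus, I_all, vscale; simpl;
    repeat match goal with |- context[Z.eqb ?x ?y] => destruct (Z.eqb_spec x y); try (exfalso; lia) end.
    all: try (apply Cext; simpl; ring).
    + subst n. unfold weight. rewrite Hs by (simpl; nra).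
      apply Cext; simpl; replace (tau + 0) with tau by ring.
      * rewrite <- Hx at 1. ring.
      * rewrite <- Hx at 1. ring.
    + assert (n = (-1)%Z) by lia. subst n. unfold weight. rewrite Hs by (simpl; nra).
      apply Cext; simpl.
      * replace (tau + -1) with (tau - 1) by ring.
        replace (tau - 1) with (- (sqrt (1-tau) * sqrt (1-tau))) by lra. ring.
      * replace (tau + -1) with (tau - 1) by ring.
        replace (tau - 1) with (- (sqrt (1-tau) * sqrt (1-tau))) by lra. ring.
Qed.

Lemma kernel_unique q tau a b : q >= 1/4 -> 0 <= tau <= 1 -> q + 2*tau*(tau-1) = 0 ->
  in_kernel q tau I_all (a,b) ->
  exists c, (a,b) = (vscale c (fst (psi0 tau)), vscale c (snd (psi0 tau))).
Proof.
  intros Hq Ht He [_ [_ H]].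
  assert (Hx : sqrt tau * sqrt tau = tau) by (apply sqrt_sqrt; lra).
  assert (Hy : sqrt (1-tau) * sqrt (1-tau) = 1-tau) by (apply sqrt_sqrt; lra).
  assert (Px : 0 <= sqrt tau) by apply sqrt_pos.
  assert (Py : 0 <= sqrt (1-tau)) by apply sqrt_pos.
  assert (Hs : forall z, q + z = tau * (1-tau) -> sqrt (q + z) = sqrt tau * sqrt (1-tau)).
  { intros z Hz. rewrite Hz. apply sqrt_lem_1. nra. nra.
    replace (sqrt tau * sqrt (1 - tau) * (sqrt tau * sqrt (1 - tau))) with
      ((sqrt tau * sqrt tau) * (sqrt (1 - tau) * sqrt (1 - tau))) by ring. rewrite Hx, Hy; ring. }
  destruct (kern_eqs _ _ _ _ _ H 0%Z) as [E1 _].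
  destruct (kern_eqs _ _ _ _ _ H (-1)%Z) as [_ E2].
  unfold H0, Hplus, Hminus, I_all in E1, E2; simpl in E1, E2. unfold weight in E1, E2.
  rewrite Hs in E1 by (simpl; nra). rewrite Hs in E2 by (simpl; nra).
  set (x := sqrt tau) in *. set (y := sqrt (1-tau)) in *.
  destruct (a 0%Z) as [ar ai] eqn:Ea. destruct (b (-1)%Z) as [br bi] eqn:Eb.
  unfold Cadd, RCmul, Copp, C0 in E1, E2; simpl in E1, E2.
  injection E1 as E1a E1b. injection E2 as E2a E2b.
  exists (mkC (y*ar - x*br) (y*ai - x*bi)).
  f_equal; apply functional_extensionality; intro n; unfold vscale, psi0; simpl.
  - destruct (Z.eqb_spec n 0).
    + subst n. rewrite Ea. fold y. apply Cext; simpl.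
      * replace ((y*ar - x*br)*y - (y*ai - x*bi)*0) with ((y*y)*ar - (x*y)*br) by ring. rewrite Hy. lra.
      * replace ((y*ar - x*br)*0 + (y*ai - x*bi)*y) with ((y*y)*ai - (x*y)*bi) by ring. rewrite Hy. lra.
    + rewrite (proj1 (princ_pair q tau a b n Hq Ht H (or_introl n0))). apply Cext; simpl; ring.
  - destruct (Z.eqb_spec n (-1)).
    + subst n. rewrite Eb. fold x. apply Cext; simpl.
      * replace ((y*ar - x*br)*(-x) - (y*ai - x*bi)*0) with ((x*x)*br - (x*y)*ar) by ring. rewrite Hx. lra.
      * replace ((y*ar - x*br)*0 + (y*ai - x*bi)*(-x)) with ((x*x)*bi - (x*y)*ai) by ring. rewrite Hx. lra.
    + replace n with (n+1-1)%Z by lia.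
      rewrite (proj2 (princ_pair q tau a b (n+1) Hq Ht H (or_introl (ltac:(lia) : (n+1 <> 0)%Z)))). apply Cext; simpl; ring.
Qed.

Lemma psi0_nz tau : 0 <= tau <= 1 ->
  (vscale (mkC 1 0) (fst (psi0 tau)), vscale (mkC 1 0) (snd (psi0 tau))) <> (vzero, vzero) /\
  psi0 tau <> (vzero, vzero).
Proof.
  intros Ht.
  assert (Hx : sqrt tau * sqrt tau = tau) by (apply sqrt_sqrt; lra).
  assert (Hy : sqrt (1-tau) * sqrt (1-tau) = 1-tau) by (apply sqrt_sqrt; lra).
  split; intro E; injection E as E1 E2;
    apply (f_equal (fun f => f 0%Z)) in E1; apply (f_equal (fun f => f (-1)%Z)) in E2;
    unfold vscale, psi0, vzero, C0 in E1, E2; simpl in E1, E2;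
    injection E1; injection E2; intros; nra.
Qed.

Theorem mainTheorem13 :
  (* discrete series: zero kernel *)
  (forall l : R, l > 1/2 ->
     (forall psi, in_kernel (l * (1 - l)) l I_pos psi -> psi = (vzero, vzero)) /\
     (forall psi, in_kernel (l * (1 - l)) (- l) I_neg psi -> psi = (vzero, vzero))) /\
  (* principal series *)
  (forall q tau : R, q >= 1/4 -> 0 <= tau <= 1 ->
     ((exists psi, in_kernel q tau I_all psi /\ psi <> (vzero, vzero)) <-> onArcQ q tau) /\
     (onArcQ q tau ->
        psi0 tau <> (vzero, vzero) /\
        forall psi, in_kernel q tau I_all psi <->
          exists c : Cplx, psi = (vscale c (fst (psi0 tau)), vscale c (snd (psi0 tau))))).
Proof.
  split.
  - intros l Hl; split; intros psi Hk; [exact (disc_pos l psi Hl Hk) | exact (disc_neg l psi Hl Hk)].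
  - intros q tau Hq Ht. split.
    + split.
      * intros [[a b] [Hk Hne]].
        destruct (Req_dec (q + 2*tau*(tau-1)) 0) as [E|E]; [apply arc_of; auto|].
        exfalso; apply Hne. destruct Hk as [_ [_ H]].
        f_equal; apply functional_extensionality; intro n; unfold vzero.
        -- exact (proj1 (princ_pair q tau a b n Hq Ht H (or_intror E))).
        -- replace n with (n+1-1)%Z by lia.
           exact (proj2 (princ_pair q tau a b (n+1) Hq Ht H (or_intror E))).
      * intros [E _].
        exists (vscale (mkC 1 0) (fst (psi0 tau)), vscale (mkC 1 0) (snd (psi0 tau))).
        split. apply (psi0_kernel q tau); lra. apply (psi0_nz tau Ht).
    + intros [E _]. split. apply (psi0_nz tau Ht).
      intro psi; split.
      * intro Hk; destruct psi; apply (kernel_unique q tau); auto; lra.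
      * intros [c ->]; apply (psi0_kernel q tau); lra.
Qed.
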